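(* Let $p\ge 3$ be a prime and let $w$ be a zero-sum-free $\mathbb{Z}_p$-arc-labelling of $\overleftrightarrow{K}_3$. Then there exist a vertex $v\in V(\overleftrightarrow{K}_3)$ and directed paths $P_1,P_2$ of positive length in $\overleftrightarrow{K}_3$, both ending at $v$, such that the three values $0$, $\sum_{(x,y)\in A(P_1)} w(x,y)$ and $\sum_{(x,y)\in A(P_2)} w(x,y)$ are pairwise distinct.
   Context: $\overleftrightarrow{K}_3$ denotes the complete digraph on $3$ vertices whose arc set consists of all ordered pairs of distinct vertices; $A(P)$ denotes the arc set of a path $P$. A $\mathbb{Z}_p$-arc-labelling is a function from the arc set to the cyclic group $\mathbb{Z}_p$; it is zero-sum-free if no directed cycle (including directed cycles of length two) has arc-labels summing to $0$ in $\mathbb{Z}_p$. *)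

(* Defs.v *)
(* Vertices of the complete digraph K3 are 'I_3;
   every ordered pair of distinct vertices is an arc. *)
From mathcomp Require Import all_boot all_algebra.
Set Implicit Arguments. Unset Strict Implicit. Unset Printing Implicit Defensive.
Import GRing.Theory.
Local Open Scope ring_scope.

(* A Z_p-arc-labelling: values on the diagonal (non-arcs) are never used. *)
Definition labelling (p : nat) := 'I_3 -> 'I_3 -> 'Z_p.

Definition walk_weight (p : nat) (w : labelling p) (x : 'I_3) (s : seq 'I_3) : 'Z_p :=
  \sum_(e <- zip (x :: s) s) w e.1 e.2.

Definition is_dpath (x : 'I_3) (s : seq 'I_3) : bool :=
  uniq (x :: s) && (s != [::]).

(* directed cycle x :: s -> x with at least 2 distinct vertices
   (includes directed 2-cycles); its weight includes the closing arc *)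
Definition is_dcycle (x : 'I_3) (s : seq 'I_3) : bool :=
  uniq (x :: s) && (s != [::]).

Definition cycle_weight (p : nat) (w : labelling p) (x : 'I_3) (s : seq 'I_3) : 'Z_p :=
  walk_weight w x (rcons s x).

Definition zero_sum_free (p : nat) (w : labelling p) : Prop :=
  forall (x : 'I_3) (s : seq 'I_3), is_dcycle x s -> cycle_weight w x s != 0.

(* Main.v *)
Require Import Defs.
From mathcomp Require Import all_boot all_algebra.
From Stdlib Require Import Classical.
Import GRing.Theory.
Set Implicit Arguments. Unset Strict Implicit.
Local Open Scope ring_scope.

Definition pairok (V : zmodType) (s : seq V) :=
  all (fun x => all (fun y => (x == 0) || (y == 0) || (x == y)) s) s.

Lemma pairokP (V : zmodType) (s : seq V) : pairok s ->
  forall x y, x \in s -> y \in s -> [\/ x = 0, y = 0 | x = y].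
Proof.
move=> /allP H x y xs ys; have /allP := H x xs => /(_ y ys).
by case/orP => [/orP [] /eqP|/eqP]; [constructor 1|constructor 2|constructor 3].
Qed.

Ltac mem := by rewrite !inE eqxx ?orbT.

Lemma eq_of_add (V : zmodType) (x y : V) : x + y = 0 -> x = - y.
Proof. by move/eqP; rewrite addr_eq0 => /eqP. Qed.

Lemma add_same (V : zmodType) (x y : V) : x + y = y -> x = 0.
Proof. by move/(canRL (addrK y)); rewrite subrr. Qed.

Lemma vz (V : zmodType) (b al be : V) :
  pairok [:: 0; b; al + 0; be + b] -> al + be != 0 -> b != 0 ->
  (al = 0 /\ be = - b) \/ (al = b /\ be = 0).
Proof.
move=> H hs bn; have P := pairokP H; rewrite addr0 in P.
case: (eqVneq al 0) => [al0|aln].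
- left; split => //; subst al; rewrite add0r in hs.
  case: (P b (be + b)); try mem.
  + by move=> b0; rewrite b0 eqxx in bn.
  + exact: eq_of_add.
  + by move=> e; have := add_same (esym e); move=> be0; rewrite be0 eqxx in hs.
- right.
  have alb : al = b.
    case: (P b al); try mem.
    + by move=> b0; rewrite b0 eqxx in bn.
    + by move=> a0; rewrite a0 eqxx in aln.
    + by [].
  split => //; subst al.
  case: (P b (be + b)); try mem.
  + by move=> b0; rewrite b0 eqxx in bn.
  + by move/eq_of_add => e; rewrite e addrN eqxx in hs.
  + by move/esym/add_same.
Qed.

Lemma vnn (V : zmodType) (a b al be : V) :
  pairok [:: a; b; al + a; be + b] -> a != 0 -> b != 0 ->
  [/\ a = b, al = 0 \/ al = - a & be = 0 \/ be = - a].
Proof.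
move=> H an bn; have P := pairokP H.
have ab : a = b.
  case: (P a b); try mem.
  + by move=> b0; rewrite b0 eqxx in an.
  + by move=> b0; rewrite b0 eqxx in bn.
  + by [].
subst b; split => //.
- case: (P a (al + a)); try mem.
  + by move=> b0; rewrite b0 eqxx in an.
  + by move/eq_of_add; right.
  + by move/esym/add_same; left.
- case: (P a (be + a)); try mem.
  + by move=> b0; rewrite b0 eqxx in an.
  + by move/eq_of_add; right.
  + by move/esym/add_same; left.
Qed.

Definition HypB (V : zmodType) (w : 'I_3 -> 'I_3 -> V) :=
  forall u v u', u != v -> v != u' -> u != u' ->
  pairok [:: w u v; w u' v; w u' u + w u v; w u u' + w u' v].
Definition Hyp2 (V : zmodType) (w : 'I_3 -> 'I_3 -> V) :=
  forall x y, x != y -> w x y + w y x != 0.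
Definition Hyph (V : zmodType) := forall t : V, t + t = 0 -> t = 0.

Lemma nz_of (V : zmodType) (w : 'I_3 -> 'I_3 -> V) : Hyp2 w ->
  forall x y, x != y -> w x y = 0 -> w y x != 0.
Proof. by move=> H x y xy e; have := H x y xy; rewrite e add0r. Qed.

Lemma negneg (V : zmodType) (h2 : Hyph V) (x : V) : x != 0 -> x = - x -> False.
Proof. by move=> n e; have := h2 x; rewrite {2}e addrN => /(_ erefl) x0; rewrite x0 eqxx in n. Qed.

Lemma side (V : zmodType) (w : 'I_3 -> 'I_3 -> V) : HypB w -> Hyp2 w ->
  forall u v u', u != v -> v != u' -> u != u' ->
  w u' v = 0 -> w v u != 0 -> w v u' != 0 ->
  (w u' u = 0 /\ w v u' = w v u) \/ (w u' u = w v u /\ w v u' = - w v u).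
Proof.
move=> HB H2 u v u' uv vu' uu' e0 n1 n2.
have P := HB u' u v ltac:(rewrite eq_sym; assumption) uv ltac:(rewrite eq_sym; assumption).
have hs : w v u' + w u' v != 0 by exact: H2.
case: (eqVneq (w u' u) 0) => [a0|an].
- rewrite a0 in P; case: (vz P hs n1) => [[b0 _]|[e _]].
  + by rewrite b0 eqxx in n2.
  + by left.
- case: (vnn P an n1) => ab [b0|e] _; first by rewrite b0 eqxx in n2.
  by right; rewrite e ab.
Qed.

Lemma C1 (V : zmodType) (w : 'I_3 -> 'I_3 -> V) : HypB w -> Hyp2 w -> Hyph V ->
  forall u v u', u != v -> v != u' -> u != u' ->
  w u v = 0 -> w u' v = 0 -> False.
Proof.
move=> HB H2 h2 u v u' uv vu' uu' e1 e2.
have n1 : w v u != 0 by apply: nz_of.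
have n2 : w v u' != 0 by apply: nz_of => //; rewrite eq_sym.
have S1 := side HB H2 uv vu' uu' e2 n1 n2.
have S2 := side HB H2 (u:=u') (v:=v) (u':=u) ltac:(rewrite eq_sym; assumption) ltac:(rewrite eq_sym; assumption) ltac:(rewrite eq_sym; assumption) e1 n2 n1.
have h12 := H2 u u' uu'.
case: S1 => [[a1 b1]|[a1 b1]]; case: S2 => [[a2 b2]|[a2 b2]].
- by rewrite a1 a2 addr0 eqxx in h12.
- by rewrite b1 in b2; apply: (negneg h2 n1 b2).
- by rewrite b2 in b1; apply: (negneg h2 n2 b1).
- by rewrite a2 a1 b1 addNr eqxx in h12.
Qed.

Ltac nsym := rewrite eq_sym; assumption.

Lemma ZG (V : zmodType) (w : 'I_3 -> 'I_3 -> V) : HypB w -> Hyp2 w -> Hyph V ->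
  forall u v u', u != v -> v != u' -> u != u' ->
  w u v = 0 -> w u u' = 0 -> False.
Proof.
move=> HB H2 h2 u v u' uv vu' uu' e1 e2.
have n1 : w v u != 0 by apply: nz_of.
have n2 : w u' u != 0 by apply: nz_of.
have n3 : w v u' != 0.
  apply/negP => /eqP e3.
  exact: (C1 HB H2 h2 (u:=u) (v:=u') (u':=v) uu' ltac:(nsym) uv e2 e3).
have P := HB u u' v uu' ltac:(nsym) uv.
rewrite e2 in P.
have hs : w v u + w u v != 0 by apply: H2; nsym.
case: (vz P hs n3) => [[b0 _]|[e _]]; first by rewrite b0 eqxx in n1.
have Q := HB v u u' ltac:(nsym) uu' vu'.
case: (vnn Q n1 n2) => _ _ [b0|b1]; first by rewrite b0 eqxx in n3.
by rewrite -e in b1; apply: (negneg h2 n1 b1).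
Qed.

Lemma Z (V : zmodType) (w : 'I_3 -> 'I_3 -> V) : HypB w -> Hyp2 w -> Hyph V ->
  forall u v u', u != v -> v != u' -> u != u' ->
  w u v = 0 -> False.
Proof.
move=> HB H2 h2 u v u' uv vu' uu' e1.
have nb : w u' v != 0.
  by apply/negP => /eqP e2; exact: (C1 HB H2 h2 uv vu' uu' e1 e2).
have P := HB u v u' uv vu' uu'; rewrite e1 in P.
have hs : w u' u + w u u' != 0 by apply: H2; nsym.
case: (vz P hs nb) => [[a0 b0]|[_ b0]]; last first.
  exact: (ZG HB H2 h2 uv vu' uu' e1 b0).
have nb2 : w v u != 0.
  apply/negP => /eqP e2.
  exact: (C1 HB H2 h2 (u:=u') (v:=u) (u':=v) ltac:(nsym) uv ltac:(nsym) a0 e2).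
have Q := HB u' u v ltac:(nsym) uv ltac:(nsym); rewrite a0 in Q.
have hs2 : w v u' + w u' v != 0 by apply: H2.
case: (vz Q hs2 nb2) => [[c0 d0]|[_ d0]]; last by rewrite d0 eqxx in nb.
have nb3 : w u u' != 0.
  apply/negP => /eqP e2.
  exact: (C1 HB H2 h2 (u:=v) (v:=u') (u':=u) vu' ltac:(nsym) ltac:(nsym) c0 e2).
have R := HB v u' u vu' ltac:(nsym) ltac:(nsym); rewrite c0 in R.
have hs3 : w u v + w v u != 0 by apply: H2.
case: (vz R hs3 nb3) => [[_ f0]|[_ f1]]; last by rewrite f1 eqxx in nb2.
apply: (negneg h2 nb3).
by rewrite {1}b0 d0 opprK f0.
Qed.

Definition i0 : 'I_3 := @Ordinal 3 0 erefl.
Definition i1 : 'I_3 := @Ordinal 3 1 erefl.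
Definition i2 : 'I_3 := @Ordinal 3 2 erefl.

Lemma generic (V : zmodType) (w : 'I_3 -> 'I_3 -> V) : HypB w -> Hyp2 w -> Hyph V -> False.
Proof.
move=> HB H2 h2.
have nz : forall u v u', u != v -> v != u' -> u != u' -> w u v != 0.
  by move=> u v u' a b c; apply/negP => /eqP e; exact: (Z HB H2 h2 a b c e).
have n01 : w i0 i1 != 0 by apply: (nz _ _ i2).
have n02 : w i0 i2 != 0 by apply: (nz _ _ i1).
have n10 : w i1 i0 != 0 by apply: (nz _ _ i2).
have n12 : w i1 i2 != 0 by apply: (nz _ _ i0).
have n20 : w i2 i0 != 0 by apply: (nz _ _ i1).
have n21 : w i2 i1 != 0 by apply: (nz _ _ i0).
case: (vnn (HB i0 i2 i1 isT isT isT) n02 n12) => _ [a0|a1] _;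
  first by rewrite a0 eqxx in n10.
case: (vnn (HB i1 i0 i2 isT isT isT) n10 n20) => _ [b0|b1] _;
  first by rewrite b0 eqxx in n21.
case: (vnn (HB i0 i1 i2 isT isT isT) n01 n21) => c1 _ [d0|d1];
  first by rewrite d0 eqxx in n02.
apply: (negneg h2 n02).
by rewrite {1}d1 c1 b1 opprK a1.
Qed.

Lemma ww1 p (w : labelling p) x y : walk_weight w x [:: y] = w x y.
Proof. by rewrite /walk_weight /= big_cons big_nil addr0. Qed.
Lemma ww2 p (w : labelling p) x y z : walk_weight w x [:: y; z] = w x y + w y z.
Proof. by rewrite /walk_weight /= !big_cons big_nil addr0. Qed.

Lemma h2Zp p : prime p -> (3 <= p)%N -> forall t : 'Z_p, t + t = 0 -> t = 0.
Proof.
move=> pp p3 t e.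
have p1 : (1 < p)%N by exact: (leq_trans _ p3).
have u2 : (2%:R : 'Z_p) \is a GRing.unit.
  rewrite unitZpE // prime_coprime //; apply/negP => /(@dvdn_leq p 2 isT).
  by rewrite leqNgt p3.
have : 2%:R * t = 0 by rewrite mulr2n mulrDl mul1r.
by move/(congr1 (fun z => (2%:R)^-1 * z)); rewrite mulKr // mulr0.
Qed.

Lemma witness p (w : labelling p) u v u' : u != v -> v != u' -> u != u' ->
  ~~ pairok [:: w u v; w u' v; w u' u + w u v; w u u' + w u' v] ->
  exists (v : 'I_3) (x1 : 'I_3) (s1 : seq 'I_3) (x2 : 'I_3) (s2 : seq 'I_3),
    [/\ is_dpath x1 s1, last x1 s1 = v, is_dpath x2 s2, last x2 s2 = v &
        [/\ walk_weight w x1 s1 != 0, walk_weight w x2 s2 != 0 &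
            walk_weight w x1 s1 != walk_weight w x2 s2]].
Proof.
move=> uv vu' uu'.
set L := [:: (u, [:: v]); (u', [:: v]); (u', [:: u; v]); (u, [:: u'; v])].
have -> : [:: w u v; w u' v; w u' u + w u v; w u u' + w u' v] =
          map (fun e => walk_weight w e.1 e.2) L by rewrite /= !ww1 !ww2.
have Lok : forall e, e \in L -> is_dpath e.1 e.2 /\ last e.1 e.2 = v.
{ move=> e; rewrite !inE => /or4P [] /eqP -> /=; split => //;
  rewrite /is_dpath /= !inE ?negb_or ?uv ?vu' ?uu' //=.
  all: rewrite ?andbT ?(eq_sym u') ?(eq_sym v) ?uv ?vu' ?uu' //.
  all: by rewrite /= eq_sym vu'. }
move/allPn => [x /mapP [[x1 s1] in1 ->]] /allPn [y /mapP [[x2 s2] in2 ->]].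
rewrite /= !negb_or => /andP [/andP [n1 n2] n12].
have [d1 l1] := Lok _ in1; have [d2 l2] := Lok _ in2.
by exists v, x1, s1, x2, s2.
Qed.

Unset Implicit Arguments. Set Strict Implicit.

Theorem lemma6 (p : nat) (hp : prime p) (hp3 : (3 <= p)%N) (w : labelling p) :
  zero_sum_free w ->
  exists (v : 'I_3) (x1 : 'I_3) (s1 : seq 'I_3) (x2 : 'I_3) (s2 : seq 'I_3),
    [/\ is_dpath x1 s1, last x1 s1 = v, is_dpath x2 s2, last x2 s2 = v &
        [/\ walk_weight w x1 s1 != 0, walk_weight w x2 s2 != 0 &
            walk_weight w x1 s1 != walk_weight w x2 s2]].
Proof.
move=> zsf.
match goal with |- ?G => case: (classic G) => // nG end.
exfalso; apply: (@generic _ w).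
- move=> u v u' uv vu' uu'.
  case: (boolP (pairok _)) => // /(witness uv vu' uu') G.
  by case: nG.
- move=> x y xy; have := zsf x [:: y].
  by rewrite /cycle_weight /= ww2 /is_dcycle /= inE xy; apply.
- exact: h2Zp.
Qed.
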